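(* Let $p\ge 3$ be an odd integer, $\mu>0$ and $\alpha>0$. Let $(x_0,y_0)\in\mathbb{R}^2$ and let $(x,y)\in C^1([0,\infty);\mathbb{R}^2)$ be the global solution of \[ x'(t)=y(t),\qquad y'(t)=-\alpha x(t)^p-\mu y(t),\quad t>0,\qquad x(0)=x_0,\ y(0)=y_0. \] Define \[ \mathcal{E}(t):=\frac12 y(t)^2+\frac{\mu}{2}x(t)y(t)+\frac{\mu^2}{4}x(t)^2+\frac{\alpha}{p+1}x(t)^{p+1}. \] Then there exists a constant $\nu>0$ such that \[ \mathcal{E}'(t)+\nu\,\frac{\mathcal{E}(t)^{\frac{p+1}{2}}}{1+\mathcal{E}(t)^{\frac{p-1}{2}}}\le 0\quad\text{for all } t\ge 0. \]
   Context: The function $\mathcal{E}(t)$ is nonnegative for all $t$ (since $p+1$ is even and $\mathcal{E}(t)=\frac14(y+\mu x)^2+\frac14 y^2+\frac{\alpha}{p+1}x^{p+1}$), so its real powers are well defined. *)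

(* Defs.v *)
From Stdlib Require Import Reals.
From Coquelicot Require Import Coquelicot.
Open Scope R_scope.

(* Derivative of f at t relative to the half-line [0, +oo):
   limit of (f s - f t)/(s - t) as s -> t with s >= 0, s <> t.
   For t > 0 this is the usual two-sided derivative, at t = 0 the
   right derivative (as in C^1([0,oo))). *)
Definition has_deriv_nonneg (f : R -> R) (t l : R) : Prop :=
  filterlim (fun s => (f s - f t) / (s - t))
    (within (fun s => 0 <= s /\ s <> t) (locally t)) (locally l).

Definition cont_nonneg (f : R -> R) (t : R) : Prop :=
  filterlim f (within (fun s => 0 <= s) (locally t)) (locally (f t)).

Definition energy (p : nat) (mu alpha : R) (x y : R -> R) (t : R) : R :=
  / 2 * (y t) ^ 2 + mu / 2 * x t * y t + mu ^ 2 / 4 * (x t) ^ 2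
  + alpha / INR (p + 1) * (x t) ^ (p + 1).

(* Main.v *)
Require Import Defs.
From Stdlib Require Import Reals Arith Lra Lia Psatz.
From Coquelicot Require Import Coquelicot.
Open Scope R_scope.

Definition Fw (t : R) := within (fun s => 0 <= s /\ s <> t) (locally t).
Definition Dv (f : R -> R) t l := filterlim (fun s => (f s - f t) / (s - t)) (Fw t) (locally l).

Lemma Fw_filter t : Filter (Fw t).
Proof. apply within_filter, locally_filter. Qed.
#[local] Existing Instance Fw_filter.

Lemma lim_plus t f g a b :
  filterlim f (Fw t) (locally a) -> filterlim g (Fw t) (locally b) ->
  filterlim (fun s => f s + g s) (Fw t) (locally (a + b)).
Proof.
  intros Hf Hg.
  apply (filterlim_comp_2 f g Rplus Hf Hg).
  exact (@filterlim_plus R_AbsRing R_NormedModule a b).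
Qed.

Lemma lim_mult t f g a b :
  filterlim f (Fw t) (locally a) -> filterlim g (Fw t) (locally b) ->
  filterlim (fun s => f s * g s) (Fw t) (locally (a * b)).
Proof.
  intros Hf Hg.
  apply (filterlim_comp_2 f g Rmult Hf Hg).
  exact (@filterlim_mult R_AbsRing a b).
Qed.

Lemma lim_eq (F : (R -> Prop) -> Prop) (g : R -> R) a b :
  filterlim g F (locally a) -> a = b -> filterlim g F (locally b).
Proof. intros H ->; exact H. Qed.

Lemma lim_sub t : filterlim (fun s => s - t) (Fw t) (locally 0).
Proof.
  apply filterlim_locally. intros eps. exists eps. intros s Hs _.
  unfold ball in *; simpl in *. unfold AbsRing_ball, abs, minus, plus, opp in *; simpl in *.
  replace (s - t + - 0) with (s + - t) by ring. exact Hs.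
Qed.

Lemma Dv_cont f t l : Dv f t l -> filterlim f (Fw t) (locally (f t)).
Proof.
  intros H.
  apply filterlim_ext_loc with (f := fun s => f t + (f s - f t) / (s - t) * (s - t)).
  - exists (mkposreal 1 Rlt_0_1). intros s _ [_ Hs]. field. lra.
  - eapply lim_eq. apply lim_plus. apply filterlim_const. apply lim_mult. exact H. apply lim_sub. simpl. ring.
Qed.

Lemma Dv_plus f g t a b : Dv f t a -> Dv g t b -> Dv (fun s => f s + g s) t (a + b).
Proof.
  intros Hf Hg. unfold Dv.
  apply filterlim_ext with (f := fun s => (f s - f t) / (s - t) + (g s - g t) / (s - t)).
  - intros s. unfold Rdiv. ring.
  - apply lim_plus; assumption.
Qed.

Lemma Dv_mult f g t a b : Dv f t a -> Dv g t b -> Dv (fun s => f s * g s) t (f t * b + g t * a).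
Proof.
  intros Hf Hg. unfold Dv.
  apply filterlim_ext with (f := fun s => f s * ((g s - g t) / (s - t)) + g t * ((f s - f t) / (s - t))).
  - intros s. unfold Rdiv. ring.
  - apply lim_plus; apply lim_mult; try assumption.
    eapply Dv_cont; eassumption. apply filterlim_const.
Qed.

Lemma Dv_const c t : Dv (fun _ => c) t 0.
Proof.
  unfold Dv. apply filterlim_ext with (f := fun _ => 0).
  intros s. unfold Rdiv. ring. apply filterlim_const.
Qed.

Lemma Dv_eq f t a b : Dv f t a -> a = b -> Dv f t b.
Proof. intros H ->. exact H. Qed.

Lemma Dv_scal c f t a : Dv f t a -> Dv (fun s => c * f s) t (c * a).
Proof.
  intros H. eapply Dv_eq. apply Dv_mult. apply Dv_const. exact H. simpl; ring.
Qed.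

Lemma Dv_pow f t a n : Dv f t a -> Dv (fun s => f s ^ n) t (INR n * f t ^ (n - 1) * a).
Proof.
  intros H. induction n.
  - apply (Dv_eq (fun s => f s ^ 0) t 0). exact (Dv_const 1 t). simpl; ring.
  - eapply Dv_eq. apply (Dv_mult f (fun s => f s ^ n)). exact H. exact IHn.
    destruct n. simpl. ring. rewrite !S_INR. simpl. replace (n - 0)%nat with n by lia. simpl; ring.
Qed.

Lemma Dv_energy p mu al x y t a b : Dv x t a -> Dv y t b ->
  Dv (energy p mu al x y) t
   (/2 * (INR 2 * y t ^ 1 * b) + (mu / 2 * x t * b + y t * (mu/2 * a))
    + mu ^ 2 / 4 * (INR 2 * x t ^ 1 * a) + al / INR (p+1) * (INR (p+1) * x t ^ (p + 1 - 1) * a)).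
Proof.
  intros Hx Hy.
  pose proof (Dv_scal (/2) _ t _ (Dv_pow y t b 2 Hy)) as h1.
  pose proof (Dv_mult _ _ t _ _ (Dv_scal (mu/2) x t a Hx) Hy) as h2.
  pose proof (Dv_scal (mu^2/4) _ t _ (Dv_pow x t a 2 Hx)) as h3.
  pose proof (Dv_scal (al/INR(p+1)) _ t _ (Dv_pow x t a (p+1) Hx)) as h4.
  exact (Dv_plus _ _ t _ _ (Dv_plus _ _ t _ _ (Dv_plus _ _ t _ _ h1 h2) h3) h4).
Qed.
Lemma key k mu al c x y : 0<mu -> 0<al -> 0<c<=al ->
 0 <= /2*y^2 + mu/2*x*y + mu^2/4*x^2 + c*(x^2)^(k+1) /\
 (/2*y^2 + mu/2*x*y + mu^2/4*x^2 + c*(x^2)^(k+1))^(k+1) <=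
   (2 + (mu^2)^(k+1)/al) * (y^2 + al*(x^2)^(k+1)) *
   (1 + (/2*y^2 + mu/2*x*y + mu^2/4*x^2 + c*(x^2)^(k+1))^k).
Proof.
  intros Hmu Hal Hc.
  set (X := (x^2)^(k+1)).
  assert (HX : 0 <= X) by (apply pow_le; nra).
  set (E := /2*y^2 + mu/2*x*y + mu^2/4*x^2 + c*X).
  set (D := y^2 + al*X).
  assert (HE : 0 <= E) by (unfold E; assert (0 <= c*X) by nra; pose proof (pow2_ge_0 (y+mu*x)); pose proof (pow2_ge_0 y); nra).
  assert (HD : 0 <= D) by (unfold D; nra).
  assert (HED : E <= D + mu^2/2*x^2) by (unfold E, D; assert (c*X <= al*X) by nra; pose proof (pow2_ge_0 (y-mu*x/2)); pose proof (pow2_ge_0 (mu*x)); nra).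
  assert (HW : 0 <= E^k) by (apply pow_le; lra).
  set (Q := (mu^2)^(k+1)/al).
  assert (HQ : 0 <= Q) by (unfold Q; apply Rmult_le_pos; [apply pow_le; nra| left; apply Rinv_0_lt_compat; lra]).
  split; [exact HE|].
  rewrite pow_add, pow_1.
  destruct (Rle_lt_dec E (2*D)) as [H1|H1].
  - assert (E^k*E <= E^k*(2*D)) by (apply Rmult_le_compat_l; lra). assert (0 <= Q*D*(1+E^k)) by (apply Rmult_le_pos; [apply Rmult_le_pos|]; lra). nra.
  - assert (H2 : E <= mu^2 * x^2) by lra.
    assert (H3 : E^(k+1) <= (mu^2*x^2)^(k+1)) by (apply pow_incr; lra).
    rewrite Rpow_mult_distr in H3. fold X in H3.
    assert (Heq : E^(k+1) = E^k*E) by (rewrite pow_add, pow_1; ring).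
    assert (0 <= D*(1+E^k)) by (apply Rmult_le_pos; lra).
    assert (0 <= Q*(D*E^k)) by (apply Rmult_le_pos; [|apply Rmult_le_pos]; lra).
    assert (H4 : (mu^2)^(k+1) * X = Q * (al * X)) by (unfold Q; field; lra).
    assert (H5 : Q * (al*X) <= Q * D) by (apply Rmult_le_compat_l; unfold D; pose proof (pow2_ge_0 y); lra).
    rewrite <- Heq. lra.
Qed.

Lemma Fw_proper t : 0 <= t -> ProperFilter' (Fw t).
Proof.
  intros Ht. constructor.
  - intros [eps H]. destruct eps as [e He]. apply (H (t + e/2)).
    + unfold ball; simpl; unfold AbsRing_ball, abs, minus, plus, opp; simpl.
      rewrite Rabs_right; lra.
    + simpl. split; lra.
  - apply Fw_filter.
Qed.

Lemma at0 (f g : R -> R) l :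
  (forall s, 0 < s -> f s = g s) ->
  filterlim f (within (fun s => 0 <= s) (locally 0)) (locally (f 0)) ->
  filterlim g (Fw 0) (locally l) -> f 0 = l.
Proof.
  intros Hfg Hf Hg.
  apply (@filterlim_locally_unique R R_AbsRing R_NormedModule (Fw 0) (Fw_proper 0 (Rle_refl 0)) f).
  - intros P HP. specialize (Hf P HP). destruct Hf as [eps He]. exists eps.
    intros s Hs [H0 H1]. apply He; auto.
  - apply filterlim_ext_loc with (f := g); [|exact Hg].
    exists (mkposreal 1 Rlt_0_1). intros s _ [H0 H1]. symmetry. apply Hfg. lra.
Qed.

Theorem proposition1 (p : nat) (mu alpha x0 y0 : R) (x y dx dy : R -> R) :
  (3 <= p)%nat -> Nat.Odd p -> 0 < mu -> 0 < alpha ->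
  (* (x,y) is C^1 on [0,oo) with derivatives dx, dy *)
  (forall t, 0 <= t -> has_deriv_nonneg x t (dx t)) ->
  (forall t, 0 <= t -> has_deriv_nonneg y t (dy t)) ->
  (forall t, 0 <= t -> cont_nonneg dx t) ->
  (forall t, 0 <= t -> cont_nonneg dy t) ->
  (* the ODE for t > 0 and the initial data *)
  (forall t, 0 < t -> dx t = y t) ->
  (forall t, 0 < t -> dy t = - alpha * (x t) ^ p - mu * y t) ->
  x 0 = x0 -> y 0 = y0 ->
  exists nu : R, 0 < nu /\
    forall t, 0 <= t ->
      exists dE : R,
        has_deriv_nonneg (energy p mu alpha x y) t dE /\
        dE + nu * (energy p mu alpha x y t) ^ ((p + 1) / 2)
               / (1 + (energy p mu alpha x y t) ^ ((p - 1) / 2)) <= 0.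
Proof.
  intros Hp [k Hk] Hmu Hal Hx Hy Hcx Hcy Hox Hoy _ _.
  assert (Hdx : forall t, 0 <= t -> dx t = y t).
  { intros t Ht. destruct (Rle_lt_or_eq_dec 0 t Ht) as [Ht'|<-]. auto.
    apply at0 with (g := y). exact Hox. apply Hcx; lra.
    exact (Dv_cont y 0 (dy 0) (Hy 0 (Rle_refl 0))). }
  assert (Hdy : forall t, 0 <= t -> dy t = - alpha * (x t) ^ p - mu * y t).
  { intros t Ht. destruct (Rle_lt_or_eq_dec 0 t Ht) as [Ht'|<-]. auto.
    apply at0 with (g := fun s => - alpha * (x s) ^ p - mu * y s). exact Hoy. apply Hcy; lra.
    pose proof (Dv_cont _ _ _ (Dv_pow x 0 (dx 0) p (Hx 0 (Rle_refl 0)))) as C1.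
    pose proof (Dv_cont y 0 (dy 0) (Hy 0 (Rle_refl 0))) as C2.
    apply filterlim_ext with (f := fun s => (- alpha) * x s ^ p + (- mu) * y s).
    intros s; ring.
    apply lim_eq with (a := - alpha * x 0 ^ p + - mu * y 0); [|simpl; ring].
    apply lim_plus; apply lim_mult; auto; apply filterlim_const. }
  assert (Hp1 : ((p + 1) / 2 = k + 1)%nat).
  { subst p. replace (2 * k + 1 + 1)%nat with ((k+1)*2)%nat by lia. apply Nat.div_mul. lia. }
  assert (Hp2 : ((p - 1) / 2 = k)%nat).
  { subst p. replace (2 * k + 1 - 1)%nat with (k*2)%nat by lia. apply Nat.div_mul. lia. }
  rewrite Hp1, Hp2.
  set (c := alpha / INR (p + 1)).
  assert (HI : 1 <= INR (p + 1)).
  { rewrite plus_INR. pose proof (pos_INR p). simpl. lra. }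
  assert (Hc : 0 < c <= alpha).
  { unfold c. split. apply Rdiv_lt_0_compat; lra.
    apply Rmult_le_reg_r with (INR (p+1)); [lra|]. unfold Rdiv.
    rewrite Rmult_assoc, Rinv_l by lra. nra. }
  set (K := 2 + (mu^2)^(k+1)/alpha).
  assert (HK : 0 < K).
  { unfold K. assert (0 <= (mu^2)^(k+1)/alpha); [|lra].
    apply Rmult_le_pos; [apply pow_le; nra| left; apply Rinv_0_lt_compat; lra]. }
  exists (mu / (2 * K)). split. { apply Rdiv_lt_0_compat; lra. }
  intros t Ht.
  pose proof (Dv_energy p mu alpha x y t _ _ (Hx t Ht) (Hy t Ht)) as HE.
  eexists. split. exact HE.
  rewrite Hdx, Hdy by exact Ht.
  assert (Hpow : x t ^ (p + 1) = (x t ^ 2) ^ (k + 1)).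
  { rewrite <- pow_mult. f_equal. lia. }
  assert (Hpm : (p + 1 - 1 = p)%nat) by lia. rewrite Hpm.
  assert (Hxx : x t * x t ^ p = x t ^ (p+1)) by (rewrite pow_add; simpl; ring).
  assert (Hen : energy p mu alpha x y t =
     /2*y t^2 + mu/2*x t*y t + mu^2/4*x t^2 + c*(x t^2)^(k+1)).
  { unfold energy, c. rewrite Hpow. reflexivity. }
  rewrite Hen.
  destruct (key k mu alpha c (x t) (y t) Hmu Hal Hc) as [E0 EK].
  set (E := /2*y t^2 + mu/2*x t*y t + mu^2/4*x t^2 + c*(x t^2)^(k+1)) in *.
  set (D := y t^2 + alpha*(x t^2)^(k+1)) in *.
  assert (HdE : / 2 * (INR 2 * y t ^ 1 * (- alpha * x t ^ p - mu * y t)) +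
     (mu / 2 * x t * (- alpha * x t ^ p - mu * y t) + y t * (mu / 2 * y t)) +
     mu ^ 2 / 4 * (INR 2 * x t ^ 1 * y t) + c * (INR (p + 1) * x t ^ p * y t)
     = - (mu/2) * D).
  { unfold D. rewrite <- Hpow, <- Hxx. unfold c. simpl INR. field. lra. }
  fold c. rewrite HdE. fold K in EK.
  assert (HW : 0 <= E^k) by (apply pow_le; lra).
  assert (Hr : E^(k+1) / (1 + E^k) <= K * D).
  { apply Rmult_le_reg_r with (1 + E^k); [lra|]. unfold Rdiv.
    rewrite Rmult_assoc, Rinv_l by lra. lra. }
  assert (mu / (2*K) * E^(k+1) / (1 + E^k) <= mu/(2*K) * (K*D)).
  { replace (mu / (2*K) * E^(k+1) / (1 + E^k)) with (mu / (2*K) * (E^(k+1) / (1 + E^k))) by (unfold Rdiv; ring).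
    apply Rmult_le_compat_l. apply Rlt_le, Rdiv_lt_0_compat; lra. exact Hr. }
  assert (mu/(2*K) * (K*D) = mu/2*D) by (field; lra).
  lra.
Qed.
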